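(* Let $X$ be a compact Hausdorff space, $\varphi:X\to X$ a continuous surjection, and let $(Y,\psi)$ be a minimal homeomorphism extension of $(X,\varphi)$. Then $(Y,\psi)$ is conjugate to the canonical homeomorphism extension $(\tilde X,\tilde\varphi)$.
   Context: A system $(Y,\psi)$ ($Y$ compact Hausdorff, $\psi$ a continuous surjection) is an extension of $(X,\varphi)$ if there is a continuous surjection $q:Y\to X$ (the extension map) with $q\circ\psi=\varphi\circ q$; if the map is a homeomorphism it is a conjugacy, and the systems are conjugate. A homeomorphism extension is an extension in which $\psi$ is a homeomorphism. The canonical homeomorphism extension: $\tilde X=\{(x_1,x_2,\dots)\in\prod_{n\ge1}X : x_n=\varphi(x_{n+1})\ \forall n\}$ with product topology, $\tilde\varphi(x_1,x_2,\dots)=(\varphi(x_1),x_1,x_2,\dots)$, extension map $p(x_1,x_2,\dots)=x_1$. A homeomorphism extension $(Y,\psi)$ of $(X,\varphi)$ is minimal if whenever $(Z,\sigma)$ is a homeomorphism extension of $(X,\varphi)$ and $(Y,\psi)$ is an extension of $(Z,\sigma)$ such that the composition of the extension map of $Z$ over $X$ with the extension map of $Y$ over $Z$ equals the extension map of $Y$ over $X$, then $(Y,\psi)$ and $(Z,\sigma)$ are conjugate. *)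

(* Defs.v *)
From HB Require Import structures.
From mathcomp Require Import all_boot all_order all_algebra.
From mathcomp Require Import all_classical all_reals all_analysis.
Set Implicit Arguments. Unset Strict Implicit. Unset Printing Implicit Defensive.
Local Open Scope classical_set_scope.

Definition onto {A B : Type} (f : A -> B) := forall b, exists a, f a = b.

Definition compact_hausdorff (T : topologicalType) :=
  compact [set: T] /\ hausdorff_space T.

Definition homeomorphism {A B : topologicalType} (h : A -> B) :=
  continuous h /\ exists g : B -> A, [/\ continuous g, cancel h g & cancel g h].

Definition conjugate {A B : topologicalType} (a : A -> A) (b : B -> B) :=
  exists h : A -> B, homeomorphism h /\ h \o a = b \o h.

Definition extension_map {X Y : topologicalType} (phi : X -> X) (psi : Y -> Y)
  (q : Y -> X) :=
  [/\ continuous q, onto q & q \o psi = phi \o q].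

(* (Y, psi) with extension map q is a homeomorphism extension of (X, phi);
   (Y, psi) is required to be a system: Y compact Hausdorff, psi a continuous
   surjection (implied by psi being a homeomorphism) *)
Definition homeo_extension {X Y : topologicalType} (phi : X -> X) (psi : Y -> Y)
  (q : Y -> X) :=
  [/\ compact_hausdorff Y, homeomorphism psi & extension_map phi psi q].

Definition minimal_homeo_extension {X Y : topologicalType} (phi : X -> X)
  (psi : Y -> Y) (q : Y -> X) :=
  homeo_extension phi psi q /\
  forall (Z : topologicalType) (sigma : Z -> Z) (qZ : Z -> X) (r : Y -> Z),
    homeo_extension phi sigma qZ -> extension_map sigma psi r ->
    qZ \o r = q -> conjugate psi sigma.

(* the canonical homeomorphism extension (inverse limit), indexed from 0:
   tilde X = { x : nat -> X | x n = phi (x (n+1)) for all n },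
   with the subspace topology of the product topology *)
Definition inv_lim_set {X : topologicalType} (phi : X -> X) :
  set {ptws nat -> X} := [set x | forall n, x n = phi (x n.+1)].

Definition Xtilde {X : topologicalType} (phi : X -> X) : topologicalType :=
  set_type (inv_lim_set phi).

Definition tilde_fun {X : topologicalType} (phi : X -> X)
  (x : {ptws nat -> X}) : {ptws nat -> X} :=
  fun n => match n with 0 => phi (x 0%N) | n'.+1 => x n' end.

Lemma tilde_fun_mem {X : topologicalType} (phi : X -> X) (x : Xtilde phi) :
  tilde_fun phi (set_val x) \in inv_lim_set phi.
Proof.
apply/mem_set; case: x => x /= /set_mem Hx [|n] //=.
Qed.

Definition tilde {X : topologicalType} (phi : X -> X) :
  Xtilde phi -> Xtilde phi :=
  fun x => exist _ (tilde_fun phi (set_val x)) (tilde_fun_mem x).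

Definition tilde_p {X : topologicalType} (phi : X -> X) (x : Xtilde phi) : X :=
  set_val x 0%N.
Arguments tilde {X} phi _.
Arguments tilde_p {X} phi _.

(* Main.v *)
Require Import Defs.
From HB Require Import structures.
From mathcomp Require Import all_boot all_order all_algebra.
From mathcomp Require Import all_classical all_reals all_analysis.
Local Open Scope classical_set_scope.

Lemma ptws_cont (Z X : topologicalType) (f : Z -> {ptws nat -> X}) :
  (forall n, continuous (fun z => f z n)) -> continuous f.
Proof.
move=> fc z; apply/cvg_sup => i.
have := @continuous_comp_initial _ Z X (fun g : nat -> X => g i) f (fc i).
exact.
Qed.

Lemma proj_cont (X : topologicalType) n : continuous (fun f : {ptws nat -> X} => f n).
Proof. exact: (@proj_continuous nat (fun _ => X) n). Qed.

Lemma into_Xtilde_cont (Z X : topologicalType) (phi : X -> X) (f : Z -> Xtilde phi) :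
  continuous (fun z => set_val (f z)) -> continuous f.
Proof.
move=> fc.
exact: (@continuous_comp_initial _ Z _ (@set_val _ (inv_lim_set phi)) f fc).
Qed.

Lemma set_val_cont (X : topologicalType) (phi : X -> X) :
  continuous (fun x : Xtilde phi => set_val x).
Proof. exact: (@initial_continuous (inv_lim_set phi) _ set_val). Qed.

Lemma Xtilde_haus (X : topologicalType) (phi : X -> X) :
  hausdorff_space X -> hausdorff_space (Xtilde phi).
Proof.
move=> hX.
have hP : hausdorff_space {ptws nat -> X}.
  exact: (@hausdorff_product nat (fun _ => X)).
rewrite open_hausdorff => x y xy.
have : set_val x != set_val y.
  by apply: contra xy => /eqP /val_inj ->.
move: hP; rewrite open_hausdorff => /[apply] -[[A B]] /= [Ax By] [oA oB AB].
exists (set_val @^-1` A, set_val @^-1` B) => /=.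
  by split; apply/mem_set; [move/set_mem: Ax | move/set_mem: By].
split.
  by apply: open_comp => // z _; exact: (@initial_continuous (inv_lim_set phi) _ set_val).
  by apply: open_comp => // z _; exact: (@initial_continuous (inv_lim_set phi) _ set_val).
by apply/eqP; rewrite -preimage_setI (eqP AB) preimage_set0.
Qed.

Theorem lemma2 (X : topologicalType) (phi : X -> X)
  (Y : topologicalType) (psi : Y -> Y) (q : Y -> X) :
  compact_hausdorff X -> continuous phi -> onto phi ->
  minimal_homeo_extension phi psi q ->
  conjugate psi (tilde phi).
Proof.
move=> [cX hX] cphi ontophi [[[cY hY] [cpsi [g [cg psig gpsi]]] [cq ontoq qpsi]] Hmin].
have rfP y n : q (iter n g y) = phi (q (iter n.+1 g y)).
  have := congr1 (fun f => f (g (iter n g y))) qpsi; rewrite /= gpsi => ->.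
  by [].
pose rf (y : Y) : {ptws nat -> X} := fun n => q (iter n g y).
have rfmem y : rf y \in inv_lim_set phi by apply/mem_set => n; exact: rfP.
pose r (y : Y) : Xtilde phi := exist _ (rf y) (rfmem y).
have itc n : continuous (iter n g).
  elim: n => [|n IH] z /=; first exact: cvg_id.
  exact: (continuous_comp (IH z) (cg _)).
have rcont : continuous r.
  apply: into_Xtilde_cont => /=; apply: ptws_cont => n z.
  exact: (continuous_comp (itc n z) (cq _)).
have ronto : onto r.
  case=> xv xm; have xP := set_mem xm.
  pose K n := [set y | q (iter n g y) = xv n].
  have Kdec n : K n.+1 `<=` K n.
    by move=> y; rewrite /K /= => H; rewrite rfP H -xP.
  have Kmono k n : K (n + k) `<=` K n.
    elim: k => [|k IH]; first by rewrite addn0.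
    by rewrite addnS; apply: subset_trans (Kdec _) IH.
  have Kne n : K n !=set0.
    have [y0 qy0] := ontoq (xv n); exists (iter n psi y0); rewrite /K /=.
    suff -> : iter n g (iter n psi y0) = y0 by [].
    elim: n {qy0} => [|n IH] //.
    by rewrite iterSr iterS psig.
  have Kcl n : closed (K n).
    have -> : K n = (q \o iter n g) @^-1` [set xv n] by [].
    apply: closed_comp; first by move=> z _; exact: (continuous_comp (itc n z) (cq _)).
    exact: (@accessible_closed_set1 X (hausdorff_accessible hX) (xv n)).
  pose F := filter_from [set: nat] K.
  have FF : ProperFilter F.
    apply: filter_from_proper; last by move=> i _; exact: Kne.
    apply: filter_from_filter; first by exists 0%N.
    move=> i j _ _; exists (maxn i j) => //.
    move=> y Ky; split.
      by apply: (Kmono (maxn i j - i)%N); rewrite subnKC // leq_maxl.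
    by apply: (Kmono (maxn i j - j)%N); rewrite subnKC // leq_maxr.
  have [y [_ cly]] := cY F FF (ex_intro2 _ _ 0%N I (fun _ _ => I)).
  exists y; apply: val_inj => /=; apply/funext => n.
  have : closure (K n) y.
    by move=> B nB; apply: cly => //; exists n.
  by rewrite -(closure_id (K n)).1.
have svc : continuous (fun z : Xtilde phi => set_val z).
  exact: (@initial_continuous (inv_lim_set phi) _ set_val).
have coordc n : continuous (fun z : Xtilde phi => set_val z n).
  by move=> z; exact: (continuous_comp (svc z) (@proj_continuous nat (fun _ => X) n _)).
have tpc : continuous (tilde_p phi) by exact: coordc 0%N.
have homt : homeomorphism (tilde phi).
  split.
    apply: into_Xtilde_cont; apply: ptws_cont => -[|n] z /=.
      exact: (continuous_comp (coordc 0%N z) (cphi _)).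
    exact: coordc.
  have utm (x : Xtilde phi) :
      (fun n => set_val x n.+1 : X) \in inv_lim_set phi.
    apply/mem_set => n; exact: (set_mem (proj2_sig x)).
  pose ut (x : Xtilde phi) : Xtilde phi := exist _ (fun n => set_val x n.+1 : X) (utm x).
  exists ut; split.
  - apply: into_Xtilde_cont; apply: ptws_cont => n z /=; exact: coordc.
  - by move=> x; apply: val_inj => /=; apply/funext => n.
  - move=> x; apply: val_inj => /=; apply/funext => -[|n] //=.
    by rewrite -(set_mem (proj2_sig x) 0%N).
have comp : compact [set: Xtilde phi].
  have -> : [set: Xtilde phi] = r @` [set: Y].
    apply/seteqP; split => // x _; have [y <-] := ronto x; by exists y.
  exact: continuous_compact (continuous_subspaceT rcont) cY.
apply: (Hmin (Xtilde phi) (tilde phi) (tilde_p phi) r).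
- split => //; first exact: (conj comp (@Xtilde_haus X phi hX)).
  split => //.
  by move=> x; have [y <-] := ontoq x; exists (r y).
- split => //.
  apply/funext => y; apply: val_inj => /=; apply/funext => -[|n] /=.
    by have := congr1 (fun f => f y) qpsi.
  change (q (iter n.+1 g (psi y)) = q (iter n g y)).
  by rewrite iterSr psig.
- by apply/funext.
Qed.
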